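(* In the setting of the directed balloon graph with parameters $(d,b)$ (with $d\ge2$, $b\ge1$, edge weight $\gamma>0$, loop weight $-\nu<0$, driver node $v_0$, target node $v_d$), the Gramian entry satisfies $$\lim_{t\to\infty}W_{v_d,v_d}(t)=\frac{b^2}{2\nu}\left(\frac{\gamma}{2\nu}\right)^{2d}\frac{(2d)!}{(d!)^2},$$ and hence, for fixed $\beta$, $$\frac{\beta^2}{2}\lim_{t\to\infty}\frac{1}{W_{v_d,v_d}(t)}=\frac{\beta^2}{2}\,\frac{2\nu}{b^2}\left(\frac{2\nu}{\gamma}\right)^{2d}\frac{(d!)^2}{(2d)!}.$$
   Context: Directed balloon graph with parameters $(d,b)$: two end nodes $v_0$ and $v_d$ and $b$ pairwise internally disjoint directed paths from $v_0$ to $v_d$, each of length $d$. Weighted adjacency matrix $A$: $A_{j,k}=\gamma$ if there is an edge from node $k$ to node $j$, $A_{j,j}=-\nu$ for every node, other entries $0$. $B=\mathbf{e}_{v_0}$. $W(t)$ is the solution of $\dot W=AW+WA^T+BB^T$, $W(0)=0$. $\beta\in\mathbb{R}$ is a fixed scalar (the output displacement $y_f-\mathbf{e}_{v_d}^Te^{At_f}\mathbf{x}_0$). *)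

(* Defs.v *)
From HB Require Import structures.
From mathcomp Require Import all_boot all_order all_algebra.
From mathcomp Require Import all_classical all_reals all_analysis.
Set Implicit Arguments. Unset Strict Implicit. Unset Printing Implicit Defensive.
Import Order.TTheory GRing.Theory Num.Theory.
Local Open Scope ring_scope.

(* Directed balloon graph with parameters (d,b), d >= 2.
   Nodes are indexed by 'I_(balloon_n b d), balloon_n b d = b*(d-1) + 2:
   - node 0 is v_0, node 1 is v_d;
   - node 2 + p*(d-1) + (k-1) (p < b, 1 <= k <= d-1) is the k-th internal
     node of the p-th path v_0 -> ... -> v_d. *)
Definition balloon_n (b d : nat) : nat := (b * d.-1).+2.

Definition v0 {b d : nat} : 'I_(balloon_n b d) := ord0.
Definition vd {b d : nat} : 'I_(balloon_n b d) := @Ordinal (balloon_n b d) 1 isT.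

Definition blevel (b d : nat) (i : 'I_(balloon_n b d)) : nat :=
  if val i == 0%N then 0%N
  else if val i == 1%N then d
  else ((val i - 2) %% d.-1).+1.

Definition bpath (b d : nat) (i : 'I_(balloon_n b d)) : nat :=
  ((val i - 2) %/ d.-1)%N.

Definition bedge (b d : nat) (k j : 'I_(balloon_n b d)) : bool :=
  (blevel j == (blevel k).+1) &&
  [|| val k == 0%N, val j == 1%N | bpath k == bpath j].

Definition balloonA (R : ringType) (b d : nat) (gamma nu : R)
  : 'M[R]_(balloon_n b d) :=
  \matrix_(j, k) (if j == k then - nu
                  else if bedge k j then gamma else 0).

Definition balloonB (R : ringType) (b d : nat) : 'cV[R]_(balloon_n b d) :=
  \col_i (if i == v0 then 1 else 0).

(* Main.v *)
Require Import Defs.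
From HB Require Import structures.
From mathcomp Require Import all_boot all_order all_algebra.
From mathcomp Require Import all_classical all_reals all_analysis.
From mathcomp Require Import ring lra unstable zify.
Import Order.TTheory GRing.Theory Num.Theory.
Import numFieldNormedType.Exports.

Set Implicit Arguments. Unset Strict Implicit. Unset Printing Implicit Defensive.
Lemma sum_eq_k0 (N k0 : nat) : \sum_(0 <= k < N) (k == k0 : nat) = (k0 < N).
Proof.
elim: N => [|N IH]; first by rewrite big_geq.
rewrite big_nat_recr //= IH ltnS leq_eqVlt.
case: (ltngtP k0 N) => h; rewrite ?h ?eqxx /=; lia.
Qed.

Lemma divnS' (n m : nat) : 0 < m -> n.+1 %/ m = n %/ m + (n %% m == m.-1).
Proof.
move=> m0.
have e : n.+1 = n %/ m * m + (n %% m).+1 by rewrite [in LHS](divn_eq n m) addnS.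
have lt : n %% m < m by rewrite ltn_pmod.
rewrite e divnMDl //; congr (_ + _).
case: (ltngtP (n %% m).+1 m) => [h|h|h].
- rewrite divn_small //; symmetry; apply/eqP; lia.
- lia.
- rewrite h divnn m0; symmetry; apply/eqP; lia.
Qed.

Lemma count_mod (n m : nat) : 0 < m -> \sum_(0 <= k < n) (k %% m == m.-1 : nat) = n %/ m.
Proof.
move=> m0; elim: n => [|n IH]; first by rewrite big_geq // div0n.
by rewrite big_nat_recr //= IH divnS'.
Qed.

Definition levN (d x : nat) : nat :=
  if x == 0 then 0 else if x == 1 then d else ((x - 2) %% d.-1).+1.
Definition pathN (d x : nat) : nat := ((x - 2) %/ d.-1)%N.
Definition bedgeN (d k j : nat) : bool :=
  (levN d j == (levN d k).+1) && [|| k == 0, j == 1 | pathN d k == pathN d j].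

Lemma bedgeE b d (k j : 'I_(balloon_n b d)) : bedge k j = bedgeN d (val k) (val j).
Proof. by []. Qed.

Lemma indeg b d (i : 'I_(balloon_n b d)) : (2 <= d)%N ->
  (\sum_(k < balloon_n b d) (bedge k i : nat))%N =
  if val i == 0 then 0 else if val i == 1 then b else 1.
Proof.
move=> d2.
rewrite (eq_bigr (fun k : 'I_(balloon_n b d) => (bedgeN d k (val i) : nat))) //.
rewrite -(big_mkord xpredT (fun k => (bedgeN d k (val i) : nat))).
have iN : val i < balloon_n b d := ltn_ord i.
move: (val i) iN => x xN.
set m := d.-1.
have m0 : 0 < m by rewrite /m; lia.
have dm : d = m.+1 by rewrite /m; lia.
case: x xN => [|[|y]] xN /=.
- by rewrite big1 // => k _; rewrite /bedgeN /levN /=.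
- rewrite /balloon_n big_nat_recl // big_nat_recl //.
  rewrite /bedgeN /levN /= !andbT.
  have -> : (d == 1) = false by apply/eqP; lia.
  have -> : (d == d.+1) = false by apply/eqP; lia.
  rewrite !add0n.
  rewrite (eq_bigr (fun k => (k %% d.-1 == d.-1.-1 : nat))); last first.
    move=> k _; rewrite !subSS subn0.
    congr nat_of_bool; apply/eqP/eqP; lia.
  by rewrite count_mod // mulnK.
have yq := divn_eq y d.-1.
have yr : y %% d.-1 < d.-1 by rewrite ltn_pmod.
case r0 : (y %% d.-1 == 0).
  rewrite (eq_bigr (fun k => (k == 0 : nat))); last first.
    move=> k _; congr nat_of_bool; rewrite /bedgeN /levN /= !subSS subn0.
    case: k => [|[|z]] /=; first by rewrite (eqP r0).
      apply/negbTE; apply/negP => /andP [/eqP h _]; lia.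
    apply/negbTE; apply/negP => /andP [/eqP h _]; lia.
  by rewrite sum_eq_k0; lia.
have r0' : y %% d.-1 != 0 by rewrite r0.
rewrite (eq_bigr (fun k => (k == y.+1 : nat))); last first.
  move=> k _; congr nat_of_bool; rewrite /bedgeN /levN /pathN /= !subSS subn0.
  case: k => [|[|z]] /=.
  - by case: eqP => h1 /=; first (exfalso; lia).
  - case: eqP => h1 /=; first (exfalso; lia).
    by case: eqP => h2 //; case: h2 => h2; rewrite -h2 mod0n in r0'.
  - rewrite subSS ?subn0.
    apply/idP/idP.
    + case/andP => /eqP h1 /eqP h2.
      have zq := divn_eq z d.-1.
      apply/eqP; lia.
    + move/eqP => zy.
      have ez : z = y %/ d.-1 * d.-1 + (y %% d.-1).-1 by lia.
      have hr : (y %% d.-1).-1 < d.-1 by lia.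
      rewrite subSS subn0 ez modnMDl divnMDl; last by lia.
      rewrite (modn_small hr) (divn_small hr) addn0 eqxx andbT.
      apply/eqP; lia.
by rewrite sum_eq_k0; rewrite /balloon_n in xN *; lia.
Qed.

Lemma bedge_lev b d (k i : 'I_(balloon_n b d)) : bedge k i -> blevel i = (blevel k).+1.
Proof. by case/andP => /eqP. Qed.

Lemma bedge_irr b d (i : 'I_(balloon_n b d)) : bedge i i = false.
Proof. by apply/negbTE/negP => /bedge_lev /n_Sn. Qed.

Lemma blevel_le b d (i : 'I_(balloon_n b d)) : (2 <= d)%N -> (blevel i <= d)%N.
Proof.
move=> d1; rewrite /blevel; case: eqP => // _; case: eqP => // _.
have : ((val i - 2) %% d.-1 < d.-1)%N by rewrite ltn_pmod //; lia.
lia.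
Qed.

Lemma blevel0 b d (i : 'I_(balloon_n b d)) : (1 <= d)%N -> (blevel i == 0)%N = (val i == 0)%N.
Proof.
move=> d1; case: i => x xi; rewrite /blevel /=.
case: x xi => [|[|x]] xi //=; lia.
Qed.

Lemma bedge_nvd b d (k i : 'I_(balloon_n b d)) : (2 <= d)%N -> bedge k i -> (val k == 1)%N = false.
Proof.
move=> d1 /bedge_lev h; apply/negbTE/negP => /eqP k1.
have := blevel_le i d1; rewrite h /blevel k1 /=; lia.
Qed.

Unset Implicit Arguments.
Local Open Scope classical_set_scope.
Local Open Scope ring_scope.

Definition Ef {R : realType} (a t : R) : R := expR (- (a * t)).
Definition Pf {R : realType} (a : R) (n : nat) (t : R) : R :=
  Ef a t * (t ^+ n / n`!%:R).
Fixpoint Gf {R : realType} (a : R) (n : nat) (t : R) : R :=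
  match n with
  | 0 => (1 - Ef a t) / a
  | k.+1 => (Gf a k t - Pf a k.+1 t) / a
  end.

Lemma Ef_derive {R : realType} (a t : R) : is_derive t (1:R) (Ef a) (- a * Ef a t).
Proof.
have h1 : is_derive t (1:R) (fun s : R => - (a * s)) (- a).
  by apply: is_derive_eq; rewrite -[in RHS](mulr1 a).
have := @is_derive1_comp R expR (fun s => - (a * s)) t _ _ (is_derive_expR (- (a * t))) h1.
by rewrite mulrC.
Qed.

Lemma is_derive_ext {R : realType} [f g : R -> R] [x df : R] :
  (forall s, f s = g s) -> is_derive x (1:R) f df -> is_derive x (1:R) g df.
Proof. by move=> e; have -> : f = g by apply/funext. Qed.

Lemma Pf_derive {R : realType} (a : R) n (t : R) :
  is_derive t (1:R) (Pf a n)
    (- a * Pf a n t + (if n is k.+1 then Pf a k t else 0)).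
Proof.
have h2 : is_derive t (1:R) (fun s : R => s ^+ n / n`!%:R)
  (n%:R * t ^+ n.-1 / n`!%:R).
  have h := is_deriveZ (n`!%:R)^-1 (is_deriveX n (is_derive_id t (1:R))).
  have e : forall s, (n`!%:R^-1 \*: @id R ^+ n) s = s ^+ n / n`!%:R.
    by move=> s; rewrite exprfctE /= mulrC.
  apply: (is_derive_eq (is_derive_ext e h)).
  change (n`!%:R^-1 * (n%:R * t ^+ n.-1 * 1) = n%:R * t ^+ n.-1 / n`!%:R).
  by rewrite mulr1 mulrC.
have := is_deriveM (Ef_derive a t) h2.
move=> h; apply: (is_derive_eq (is_derive_ext (fun s => erefl) h)).
rewrite /Pf /=; case: n {h h2} => [|k].
  rewrite /GRing.scale /= fact0 expr0.

ring.
rewrite /GRing.scale /= factS natrM.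
have k0 : (k`!%:R : R) != 0 by rewrite pnatr_eq0 -lt0n fact_gt0.
have k1 : (k.+1%:R : R) != 0 by rewrite pnatr_eq0.
by field; rewrite k0 addrC natr1 k1.
Qed.

Lemma Gf_derive {R : realType} (a : R) n (t : R) : a != 0 ->
  is_derive t (1:R) (Gf a n) (Pf a n t).
Proof.
move=> a0; elim: n => [|k IH].
  have h := is_deriveZ a^-1 (is_deriveB (is_derive_cst (1:R) t (1:R)) (Ef_derive a t)).
  apply: (is_derive_eq (is_derive_ext _ h)).
    by move=> s; rewrite /= mulrC.
  rewrite /Pf /GRing.scale /= fact0 expr0; field.
  by rewrite a0.
have h := is_deriveZ a^-1 (is_deriveB IH (Pf_derive a k.+1 t)).
apply: (is_derive_eq (is_derive_ext _ h)).
  by move=> s; rewrite /= mulrC.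
rewrite /GRing.scale /=; field.
by rewrite a0.
Qed.

Lemma inv_lim {R : realType} : (t : R) ^-1 @[t --> +oo] --> 0.
Proof.
have -> : (fun t : R => t^-1) = inv_fun (@id R) by [].
apply/gtr0_cvgV0; last exact: cvg_id.
near=> t; near: t; exact: nbhs_pinfty_gt.
Unshelve. all: by end_near. Qed.

Lemma Pf_bound {R : realType} (a : R) n (t : R) : 0 < a -> 0 < t ->
  Pf a n t <= n.+1%:R / a ^+ n.+1 * t^-1.
Proof.
move=> a0 t0.
have at0 : 0 < a * t by rewrite mulr_gt0.
have q0 : 0 < (a * t) ^+ n.+1 / n.+1`!%:R.
  by rewrite divr_gt0 ?exprn_gt0 // ltr0n fact_gt0.
have qx : (a * t) ^+ n.+1 / n.+1`!%:R <= expR (a * t).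
  apply: le_trans (expR_ge1Dxn n (ltW at0)); lra.
rewrite /Pf /Ef expRN.
rewrite [X in X <= _]mulrC.
apply: le_trans (_ : (t ^+ n / n`!%:R) * ((a * t) ^+ n.+1 / n.+1`!%:R)^-1 <= _).
  rewrite ler_pM2l; last by rewrite divr_gt0 ?exprn_gt0 // ltr0n fact_gt0.
  by rewrite lef_pV2 // ?posrE // expR_gt0.
rewrite factS natrM exprMn exprS.
have k0 : (n`!%:R : R) != 0 by rewrite pnatr_eq0 -lt0n fact_gt0.
have k1 : (n.+1%:R : R) != 0 by rewrite pnatr_eq0.
rewrite le_eqVlt; apply/orP; left; apply/eqP.
rewrite exprS.
have an : a ^+ n != 0 by rewrite expf_neq0 // gt_eqF.
have tn : t ^+ n != 0 by rewrite expf_neq0 // gt_eqF.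
have an0 : a != 0 by rewrite gt_eqF.
have tn0 : t != 0 by rewrite gt_eqF.
by field; rewrite tn0 an an0 k0 tn addrC natr1 k1.
Qed.

Lemma cvg_ext_oo {R : realType} (f g : R -> R) (l l' : R) :
  (forall x, f x = g x) -> l = l' ->
  f x @[x --> +oo] --> l -> g x @[x --> +oo] --> l'.
Proof. by move=> e <-; have -> : f = g by apply/funext. Qed.

Lemma Pf_lim {R : realType} (a : R) n : 0 < a -> Pf a n t @[t --> +oo] --> 0.
Proof.
move=> a0.
apply: (@squeeze_cvgr _ _ _ _ (fun=> 0) (fun t => n.+1%:R / a ^+ n.+1 * t^-1)).
- near=> t.
  have t0 : 0 < t by near: t; exact: nbhs_pinfty_gt.
  apply/andP; split; last exact: Pf_bound.
  rewrite /Pf mulr_ge0 // ?expR_ge0 // divr_ge0 // ?exprn_ge0 ?ltW //.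
- exact: cvg_cst.
- have := cvgMl_tmp (a := n.+1%:R / a ^+ n.+1) (@inv_lim R).
  by move=> h; rewrite -[X in _ --> X](mulr0 (n.+1%:R / a ^+ n.+1)); apply: h.
Unshelve. all: by end_near. Qed.

Lemma Gf_lim {R : realType} (a : R) n : 0 < a -> Gf a n t @[t --> +oo] --> (a ^+ n.+1)^-1.
Proof.
move=> a0; have a00 : a != 0 by rewrite gt_eqF.
elim: n => [|k IH].
  have h := cvgMr_tmp (b := a^-1) (cvgB (cvg_cst (1:R)) (Pf_lim a 0 a0)).
  have h2 : (1 - Pf a 0 x) / a @[x --> +oo] --> (1-0)/a by apply: h.
  apply: cvg_ext_oo h2.
    by move=> x; rewrite /= /Pf expr0 fact0 divr1 mulr1.
  by rewrite subr0 mul1r expr1.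
have h := cvgMr_tmp (b := a^-1) (cvgB IH (Pf_lim a k.+1 a0)).
have h2 : (Gf a k x - Pf a k.+1 x) / a @[x --> +oo] --> ((a ^+ k.+1)^-1 - 0)/a by apply: h.
apply: cvg_ext_oo h2 => //.
by rewrite subr0 [in RHS]exprSr invfM.
Qed.

Lemma Gf0 {R : realType} (a : R) n : Gf a n 0 = 0.
Proof.
elim: n => [|k IH] /=; first by rewrite /Ef mulr0 oppr0 expR0 subrr mul0r.
by rewrite IH /Pf expr0n /= mul0r mulr0 subrr mul0r.
Qed.

Lemma ode_uniq {R : realType} (a : R) (f : R -> R) :
  (forall t, is_derive t (1:R) f (- a * f t)) -> f 0 = 0 -> forall t, f t = 0.
Proof.
move=> hd f0 t.
have hg : forall s : R, is_derive s (1:R) (f * Ef (- a)) 0.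
  move=> s; apply: is_derive_eq (is_deriveM (hd s) (Ef_derive (- a) s)) _.
  by rewrite /GRing.scale /=; ring.
have := is_derive_0_is_cst t 0 hg.
move=> h; change (f t * Ef (-a) t = f 0 * Ef (-a) 0) in h.
move: h; rewrite f0 mul0r => /eqP; rewrite mulf_eq0 => /orP [/eqP //|].
by rewrite /Ef gt_eqF // expR_gt0.
Qed.

Definition cw {R : ringType} b d (i : 'I_(balloon_n b d)) : R :=
  if val i == 1%N then b%:R else 1.

Lemma sum_in {R : realType} b d (F : 'I_(balloon_n b d) -> R) i (x : R) :
  (2 <= d)%N -> (forall k, bedge k i -> F k = x) ->
  \sum_k (if bedge k i then F k else 0) = (if val i == 0%N then 0 else cw b d i) * x.
Proof.
move=> d2 hF.
rewrite (eq_bigr (fun k => (bedge k i)%:R * x)); last first.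
  by move=> k _; case: ifP => [/hF ->|_]; rewrite ?mul1r ?mul0r.
rewrite -mulr_suml -natr_sum indeg // /cw.
by case: eqP => _ //; case: eqP.
Qed.

Lemma mulA_entry {R : realType} b d (gamma nu : R) (M : 'M[R]_(balloon_n b d)) i j :
  (balloonA b d gamma nu *m M) i j =
  - nu * M i j + gamma * \sum_k (if bedge k i then M k j else 0).
Proof.
rewrite mxE mulr_sumr.
rewrite (eq_bigr (fun k => (if i == k then - nu * M k j else 0) +
                           gamma * (if bedge k i then M k j else 0))); last first.
  move=> k _; rewrite mxE; case: eqP => [<-|_]; first by rewrite bedge_irr mulr0 addr0.
  by case: ifP; rewrite ?mul0r ?mulr0 ?add0r.
rewrite big_split /= (bigD1 i) //= eqxx big1 ?addr0 //.
by move=> k /negbTE; rewrite eq_sym => ->.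
Qed.

Lemma mulAT_entry {R : realType} b d (gamma nu : R) (M : 'M[R]_(balloon_n b d)) i j :
  (M *m (balloonA b d gamma nu)^T) i j =
  - nu * M i j + gamma * \sum_k (if bedge k j then M i k else 0).
Proof.
rewrite mxE mulr_sumr.
rewrite (eq_bigr (fun k => (if j == k then - nu * M i k else 0) +
                           gamma * (if bedge k j then M i k else 0))); last first.
  move=> k _; rewrite !mxE; case: eqP => [<-|_]; first by rewrite bedge_irr mulr0 addr0 mulrC.
  by case: ifP; rewrite ?mul0r ?mulr0 ?add0r // mulrC.
rewrite big_split /= (bigD1 j) //= eqxx big1 ?addr0 //.
by move=> k /negbTE; rewrite eq_sym => ->.
Qed.

Lemma BB_entry {R : realType} b d (i j : 'I_(balloon_n b d)) :
  (balloonB R b d *m (balloonB R b d)^T) i j =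
  if (val i == 0%N) && (val j == 0%N) then 1 else 0.
Proof.
rewrite mxE big_ord1 !mxE.
have e : forall k : 'I_(balloon_n b d), (k == v0) = (val k == 0%N) by [].
rewrite !e; case: (val i == 0%N); case: (val j == 0%N);
  by rewrite /= ?mulr1 ?mul0r ?mulr0.
Qed.

Definition Vf {R : realType} (g a : R) (p q : nat) (t : R) : R :=
  g ^+ (p + q) * ('C(p + q, p))%:R * Gf a (p + q) t.

Lemma PG_rec {R : realType} (a t : R) m : a != 0 ->
  Pf a m.+1 t + a * Gf a m.+1 t = Gf a m t.
Proof. by move=> a0 /=; field. Qed.

Lemma PG_0 {R : realType} (a t : R) : a != 0 -> Pf a 0 t + a * Gf a 0 t = 1.
Proof. by move=> a0; rewrite /= /Pf expr0 fact0 divr1 mulr1; field. Qed.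

Lemma V_rec {R : realType} (g a : R) p q t : a != 0 ->
  g * (if p is p'.+1 then Vf g a p' q t else 0) +
  g * (if q is q'.+1 then Vf g a p q' t else 0) +
  (if (p + q == 0)%N then 1 else 0)
  = g ^+ (p + q) * ('C(p + q, p))%:R * (Pf a (p + q) t + a * Gf a (p + q) t).
Proof.
move=> a0; rewrite /Vf.
have e : forall n, (n.+1 == 0)%N = false by [].
case: p => [|p]; case: q => [|q].
- by rewrite PG_0 // !mulr0 !add0r /= expr0 mul1r bin0 mul1r.
- rewrite !add0n e PG_rec // mulr0 add0r addr0 !bin0 exprS; ring.
- rewrite !addn0 e PG_rec // mulr0 addr0 addr0 !binn exprS; ring.
- rewrite !addSn !addnS e PG_rec // addr0 [in RHS]exprS [in RHS]binS natrD; ring.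
Qed.

Lemma delta_form {R : realType} b d (i j : 'I_(balloon_n b d)) : (1 <= d)%N ->
  (if (val i == 0%N) && (val j == 0%N) then 1 else 0 : R) =
  cw b d i * cw b d j * (if (blevel i + blevel j == 0)%N then 1 else 0).
Proof.
move=> d1; rewrite addn_eq0 !blevel0 // /cw.
case: (val i =P 0%N) => [->|_]; case: (val j =P 0%N) => [->|_] /=;
  by rewrite ?mulr1 ?mulr0.
Qed.

Lemma S_sum {R : realType} b d (i j : 'I_(balloon_n b d)) (F : 'I_(balloon_n b d) -> R)
  (phi : nat -> R) : (2 <= d)%N ->
  (forall k, bedge k i -> F k = phi (blevel k)) ->
  \sum_k (if bedge k i then F k else 0) =
  cw b d i * (if blevel i is p.+1 then phi p else 0).
Proof.
move=> d2 hF.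
rewrite (@sum_in R b d F i (phi (blevel i).-1) d2); last first.
  by move=> k hk; rewrite hF // (bedge_lev hk).
have d1 : (1 <= d)%N by lia.
rewrite -(blevel0 i d1); case: (blevel i) => [|p] /=; by rewrite ?mul0r ?mulr0.
Qed.

Lemma if_mul {R : realType} (c : R) (n : nat) (f : nat -> R) :
  (if n is m.+1 then c * f m else 0) = c * (if n is m.+1 then f m else 0).
Proof. by case: n => [|n]; rewrite ?mulr0. Qed.

Lemma W_formula {R : realType} b d (gamma nu : R) (W : R -> 'M[R]_(balloon_n b d)) :
  (2 <= d)%N -> 0 < nu -> W 0 = 0 ->
  (forall (t : R) (i j : 'I_(balloon_n b d)),
     is_derive t 1 (fun s => W s i j)
       ((balloonA b d gamma nu *m W t + W t *m (balloonA b d gamma nu)^T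
         + balloonB R b d *m (balloonB R b d)^T) i j)) ->
  forall n (i j : 'I_(balloon_n b d)), (blevel i + blevel j < n)%N -> forall t,
    W t i j = cw b d i * cw b d j * Vf gamma (2 * nu) (blevel i) (blevel j) t.
Proof.
move=> d2 nu0 W0 hW; elim=> [//|n IH] i j hn.
have d1 : (1 <= d)%N by lia.
set a := 2 * nu.
have a0 : a != 0 by rewrite /a mulf_neq0 // gt_eqF.
set p := blevel i; set q := blevel j.
set K := cw b d i * cw b d j * (gamma ^+ (p + q) * ('C(p + q, p))%:R).
have cE : forall t, cw b d i * cw b d j * Vf gamma a p q t = K * Gf a (p + q) t.
  by move=> t; rewrite /K /Vf !mulrA.
suff hs : forall t, W t i j - cw b d i * cw b d j * Vf gamma a p q t = 0.
  by move=> t; apply/eqP; rewrite -subr_eq0 hs.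
apply: (@ode_uniq R a (fun t => W t i j - cw b d i * cw b d j * Vf gamma a p q t)); last first.
  by rewrite W0 mxE cE Gf0 mulr0 subr0.
move=> t.
have hc : is_derive t (1:R) (fun t => cw b d i * cw b d j * Vf gamma a p q t) (K * Pf a (p + q) t).
  have h := is_deriveZ K (Gf_derive a (p + q) t a0).
  apply: (is_derive_eq (is_derive_ext _ h)) => //.
have h := is_deriveB (hW t i j) hc.
apply: (is_derive_eq (is_derive_ext _ h)) => //.
have addE : forall M N : 'M[R]_(balloon_n b d), (M + N) i j = M i j + N i j.
  by move=> M N; rewrite mxE.
rewrite !addE mulA_entry mulAT_entry BB_entry.
rewrite (@S_sum R b d i j (fun k => W t k j) (fun r => cw b d j * Vf gamma a r q t) d2); last first.
  move=> k hk; rewrite IH; last by rewrite /p (bedge_lev hk) in hn; lia.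
  by rewrite /cw (bedge_nvd d2 hk) mul1r.
rewrite (@S_sum R b d j i (fun k => W t i k) (fun r => cw b d i * Vf gamma a p r t) d2); last first.
  move=> k hk; rewrite IH; last by rewrite /q (bedge_lev hk) in hn; lia.
  by rewrite /cw (bedge_nvd d2 hk) mulr1 mulrC.
rewrite (if_mul (cw b d j) p (fun r => Vf gamma a r q t)).
rewrite (if_mul (cw b d i) q (fun r => Vf gamma a p r t)).
rewrite (@delta_form R b d i j d1) -/p -/q.
have hv := V_rec gamma a p q t a0.
move: hv.
move: (match p with 0%N => 0 | m.+1 => Vf gamma a m q t end) => A1.
move: (match q with 0%N => 0 | m.+1 => Vf gamma a p m t end) => A2.
move: (if (p + q)%N == 0%N then 1 else 0 : R) => D hv.
have -> : - nu * W t i j + gamma * (cw b d i * (cw b d j * A1)) +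
  (- nu * W t i j + gamma * (cw b d j * (cw b d i * A2))) +
  cw b d i * cw b d j * D - K * Pf a (p + q) t =
  - a * W t i j + cw b d i * cw b d j * (gamma * A1 + gamma * A2 + D) - K * Pf a (p + q) t.
  by rewrite /a; ring.
rewrite hv /K /Vf; ring.
Qed.

Theorem mainTheorem2 (R : realType) (d b : nat) (gamma nu beta : R)
  (W : R -> 'M[R]_(balloon_n b d)) :
  (2 <= d)%N -> (1 <= b)%N -> 0 < gamma -> 0 < nu ->
  W 0 = 0 ->
  (forall (t : R) (i j : 'I_(balloon_n b d)),
     is_derive t 1 (fun s => W s i j)
       ((balloonA b d gamma nu *m W t + W t *m (balloonA b d gamma nu)^T
         + balloonB R b d *m (balloonB R b d)^T) i j)) ->
  (W t vd vd @[t --> +oo] -->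
     (b%:R ^+ 2 / (2 * nu)) * (gamma / (2 * nu)) ^+ (2 * d)
       * ((2 * d)`!%:R / (d`!%:R ^+ 2)))
  /\
  (beta ^+ 2 / 2 * (W t vd vd)^-1 @[t --> +oo] -->
     beta ^+ 2 / 2 * ((2 * nu) / b%:R ^+ 2) * ((2 * nu) / gamma) ^+ (2 * d)
       * (d`!%:R ^+ 2 / (2 * d)`!%:R)).
Proof.
move=> d2 b1 g0 nu0 W0 hW.
have a0 : 0 < 2 * nu by rewrite mulr_gt0.
set L0 := b%:R * b%:R * (gamma ^+ (d + d) * ('C(d + d, d))%:R) : R.
have hWd : forall t, W t vd vd = L0 * Gf (2 * nu) (d + d) t.
  move=> t; rewrite (@W_formula R b d gamma nu W d2 nu0 W0 hW (d + d).+1) //.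
  by rewrite /L0 /Vf /cw /= !mulrA.
have hl : W t vd vd @[t --> +oo] --> L0 * ((2 * nu) ^+ (d + d).+1)^-1.
  have h := cvgMl_tmp (a := L0) (Gf_lim (2 * nu) (d + d) a0).
  have h2 : L0 * Gf (2 * nu) (d + d) t @[t --> +oo] --> L0 * ((2 * nu) ^+ (d + d).+1)^-1 by apply: h.
  by apply: cvg_ext_oo h2.
have fE : (('C(d + d, d))%:R : R) = (2 * d)`!%:R / (d`!%:R ^+ 2).
  have k0 : (d`!%:R : R) != 0 by rewrite pnatr_eq0 -lt0n fact_gt0.
  rewrite mul2n -addnn -(@bin_fact (d + d) d) ?leq_addr // addnK !natrM.
  by field; rewrite k0.
have bn0 : (b%:R : R) != 0 by rewrite pnatr_eq0 -lt0n.
have gn0 : gamma != 0 by rewrite gt_eqF.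
have nn0 : nu != 0 by rewrite gt_eqF.
have fn0 : ((2 * d)`!%:R : R) != 0 by rewrite pnatr_eq0 -lt0n fact_gt0.
have dn0 : (d`!%:R : R) != 0 by rewrite pnatr_eq0 -lt0n fact_gt0.
have Lv : L0 * ((2 * nu) ^+ (d + d).+1)^-1 =
    (b%:R ^+ 2 / (2 * nu)) * (gamma / (2 * nu)) ^+ (2 * d)
       * ((2 * d)`!%:R / (d`!%:R ^+ 2)).
  rewrite /L0 fE mul2n -addnn exprS expr2 [(gamma / _) ^+ _]exprMn exprVn.
  have pn : (2 * nu) ^+ (d + d) != 0 by rewrite expf_neq0 // gt_eqF.
  rewrite [(2 * nu) ^+ (d + d).+1]exprS.
  by field; rewrite pn nn0 dn0.
rewrite -Lv; split => //.
have L0n : L0 != 0.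
  rewrite /L0 !mulf_neq0 // ?expf_neq0 // pnatr_eq0 -lt0n bin_gt0; lia.
have Ln : L0 * ((2 * nu) ^+ (d + d).+1)^-1 != 0.
  by rewrite mulf_neq0 // invr_eq0 expf_neq0 // mulf_neq0.
have h : (W t vd vd)^-1 @[t --> +oo] --> (L0 * ((2 * nu) ^+ (d + d).+1)^-1)^-1.
  by apply: (cvgV Ln hl).
have h1 := cvgMl_tmp (a := beta ^+ 2 / 2) h.
have h2 : beta ^+ 2 / 2 * (W t vd vd)^-1 @[t --> +oo] -->
   beta ^+ 2 / 2 * (L0 * ((2 * nu) ^+ (d + d).+1)^-1)^-1 by apply: h1.
apply: cvg_ext_oo h2 => //.
rewrite Lv !expr_div_n.
have pn : (2 * nu) ^+ (2 * d) != 0 by rewrite expf_neq0 // mulf_neq0.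
have gn : gamma ^+ (2 * d) != 0 by rewrite expf_neq0.
by field; rewrite ?pn ?gn ?nn0 ?dn0 ?fn0 ?bn0 ?expf_neq0.
Qed.
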